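(* Let $G$ be a finite group and let $C\subset G$ be an abundant conjugacy class. Then for every positive integer $n$ divisible by $|G|^2$, there exists $s\in G\backslash\operatorname{Sur}^C_1(F_n,G)$ such that the image in $S_n$ of the stabilizer of $s$ in $B_n$ contains an $n$-cycle.
   Context: A conjugacy class $C$ of $G$ is abundant if for some (equivalently every) $x\in C$ there is $y\in G$ such that $\{y^{-r}xy^r:r\in\mathbb Z\}$ generates $G$. $\operatorname{Sur}^C_1(F_n,G)$ is the set of $(g_1,\dots,g_n)\in C^n$ with $\langle g_1,\dots,g_n\rangle=G$ and $g_1\cdots g_n=1$; $G\backslash\operatorname{Sur}^C_1(F_n,G)$ is its set of orbits under simultaneous conjugation $(g_i)\mapsto(gg_ig^{-1})$. $B_n$ acts on it from the right via $(\dots,g_i,g_{i+1},\dots)^{\sigma_i}=(\dots,g_{i+1},g_{i+1}^{-1}g_ig_{i+1},\dots)$ (this commutes with conjugation), and $B_n\to S_n$ sends $\sigma_i\mapsto(i\ i+1)$. *)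

(* Defs.v *)
From mathcomp Require Import all_boot all_fingroup.
Set Implicit Arguments. Unset Strict Implicit. Unset Printing Implicit Defensive.
Local Open Scope group_scope.

(* Braid generator sigma_i (0-indexed i : 'I_n.-1) acts on positions i, i+1 of 'I_n. *)
Lemma ord_pred_lt n (i : 'I_n.-1) : (i < n)%N.
Proof. case: n i => [|n] [i /= hi] //. exact: (leq_trans hi (leqnSn n)). Qed.

Lemma ord_pred_ltS n (i : 'I_n.-1) : (i.+1 < n)%N.
Proof. by case: n i => [|n] [i /= hi]. Qed.

Definition posL n (i : 'I_n.-1) : 'I_n := Ordinal (ord_pred_lt i).
Definition posR n (i : 'I_n.-1) : 'I_n := Ordinal (ord_pred_ltS i).

(* A braid word: letters (i, true) = sigma_i, (i, false) = sigma_i^{-1}. *)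
Definition braid_word n := seq ('I_n.-1 * bool).

Section Braid.
Variable gT : finGroupType.

(* Right action of sigma_i^{+-1} on n-tuples:
   sigma_i   : (.., a, c, ..) |-> (.., c, c^-1 a c, ..)
   sigma_i^-1: (.., a, c, ..) |-> (.., a c a^-1, a, ..)
   (In MathComp x ^ y = y^-1 * x * y.) *)
Definition braid_gen n (l : 'I_n.-1 * bool) (g : {ffun 'I_n -> gT}) :
    {ffun 'I_n -> gT} :=
  let a := g (posL l.1) in let c := g (posR l.1) in
  [ffun j => if j == posL l.1 then (if l.2 then c else c ^ a^-1)
             else if j == posR l.1 then (if l.2 then a ^ c else a)
             else g j].

Definition braid_act n (w : braid_word n) (g : {ffun 'I_n -> gT}) :=
  foldl (fun h l => braid_gen l h) g w.

Definition conj_tuple n (h : gT) (g : {ffun 'I_n -> gT}) : {ffun 'I_n -> gT} :=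
  [ffun i => g i ^ h].

Definition SurC1 (C : {set gT}) n (g : {ffun 'I_n -> gT}) : Prop :=
  [/\ forall i, g i \in C,
      <<[set g i | i : 'I_n]>> = [set: gT] &
      \prod_(i < n) g i = 1].

(* Abundant conjugacy class: {y^-r x y^r : r in Z} = x ^: <[y]>. *)
Definition abundant (C : {set gT}) : Prop :=
  exists2 x, x \in C & exists y : gT, <<x ^: <[y]> >> = [set: gT].
End Braid.

Definition braid_perm n (w : braid_word n) : {perm 'I_n} :=
  \prod_(l <- w) tperm (posL l.1) (posR l.1).

Definition is_ncycle n (p : {perm 'I_n}) : Prop :=
  exists x : 'I_n, porbit p x = [set: 'I_n].

(* Main.v *)
Require Import Defs.
From mathcomp Require Import all_boot all_fingroup.
From mathcomp Require Import cyclic.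
Local Open Scope group_scope.

Section Helpers.
Variable gT : finGroupType.

Lemma pow_n_1 (n : nat) (z : gT) : (#|gT| %| n)%N -> z ^+ n = 1.
Proof.
move=> dn; apply/eqP; rewrite -order_dvdn; apply: dvdn_trans dn.
by rewrite -cardsT; apply: order_dvdG; rewrite inE.
Qed.

Lemma prod_conj (x y : gT) k :
  \prod_(i < k) x ^ (y ^+ i) = (x * y^-1) ^+ k * y ^+ k.
Proof.
elim: k => [|k IH]; first by rewrite big_ord0 !expg0 mulg1.
rewrite big_ord_recr /= IH conjgE !expgSr -expgVn expgVn !mulgA mulgK.
by rewrite -(mulgA _ (y ^+ k) y) -expgSr expgS mulgA mulgKV.
Qed.

Lemma sur_lemma (C : {set gT}) x y n :
  C \in classes [set: gT] -> x \in C -> <<x ^: <[y]> >> = [set: gT] ->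
  (0 < n)%N -> (#|gT| %| n)%N -> SurC1 C [ffun i : 'I_n => x ^ (y ^+ i)].
Proof.
move=> CG xC Hgen n0 dn; split.
- move=> i; rewrite ffunE; case/imsetP: CG xC => x0 _ -> /imsetP [z _ ->].
  by rewrite -conjgM memJ_class ?inE.
- apply/eqP; rewrite eqEsubset subsetT /= -Hgen; apply: genS.
  apply/subsetP => u /imsetP [z /cycleP [k ->] ->].
  have ltn : (k %% #[y] < n)%N.
    have yn : y ^+ n = 1 by apply: pow_n_1.
    have hy : (#[y] %| n)%N by rewrite order_dvdn yn.
    have y0 : (0 < #[y])%N by exact: order_gt0.
    by apply: (leq_trans (ltn_pmod _ y0)); apply: dvdn_leq.
  apply/imsetP; exists (Ordinal ltn) => //; by rewrite ffunE /= expg_mod_order.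
- under eq_bigr do rewrite ffunE.
  by rewrite prod_conj !pow_n_1 // mulg1.
Qed.
End Helpers.

Definition W m k : braid_word m.+2 :=
  [seq ((inord i : 'I_(m.+2).-1), true) | i <- iota 0 k].

Lemma W_S m k : W m k.+1 = rcons (W m k) (inord k, true).
Proof. by rewrite /W -[k.+1]addn1 iotaD map_cat cats1. Qed.

Lemma rot_step (gT : finGroupType) m (f : nat -> gT) k : (k <= m.+1)%N ->
  braid_act (W m k) [ffun j : 'I_m.+2 => f j] =
  [ffun j : 'I_m.+2 => if (j < k)%N then f j.+1
     else if j == k :> nat then f 0%N ^ (\prod_(1 <= i < k.+1) f i) else f j].
Proof.
elim: k => [|k IH] hk.
  apply/ffunP => j; rewrite !ffunE /= big_geq // conjg1.
  by case: eqP => // ->.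
rewrite W_S /braid_act foldl_rcons -/(braid_act _ _) IH ?(ltnW hk) //.
have kv : (@inord m k : nat) = k by rewrite inordK.
apply/ffunP => j; rewrite /braid_gen !ffunE /=.
have -> : (j == @posL m.+2 (inord k)) = (j == k :> nat) by rewrite -val_eqE /= kv.
have -> : (j == @posR m.+2 (inord k)) = (j == k.+1 :> nat) by rewrite -val_eqE /= kv.
rewrite ?ffunE /= ?kv.
have -> : (k.+1 < k)%N = false by rewrite ltnNge leqnSn.
have -> : (k.+1 == k) = false by rewrite gtn_eqF.
case: eqP => [->|nk]; first by rewrite ltnSn.
case: eqP => [->|nk1].
  by rewrite ltnn eqxx [in RHS]big_nat_recr //= conjgM ltnn.
case: (ltngtP j k) nk => // h _; first by rewrite ltnS ltnW.
by rewrite ltnS leqNgt h.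
Qed.

Lemma tperm_val n (a b z : 'I_n) :
  val (tperm a b z) = if z == a then val b else if z == b then val a else val z.
Proof.
case: eqP => [->|za]; first by rewrite tpermL.
case: eqP => [->|zb]; first by rewrite tpermR.
by rewrite tpermD //; apply/eqP => e; [apply: za | apply: zb].
Qed.

Lemma perm_step m k : (k <= m.+1)%N -> forall z : 'I_m.+2,
  val (braid_perm (W m k) z) =
  if val z == 0%N then k else if (val z <= k)%N then (val z).-1 else val z.
Proof.
elim: k => [|k IH] hk z.
  rewrite /braid_perm /W /= big_nil perm1.
  by case: eqP => // z0; rewrite leqn0 (introF eqP z0).
have kv : (@inord m k : nat) = k by rewrite inordK.
rewrite W_S /braid_perm big_rcons /= -/(braid_perm _) permM tperm_val.
rewrite -!val_eqE /= kv IH ?(ltnW hk) //.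
change (val z) with (nat_of_ord z); case: (nat_of_ord z) => [|v] /=.
  by rewrite eqxx.
rewrite !ltnS; case: (ltngtP v k) => h.
- by rewrite (ltn_eqF h) (ltn_eqF (leqW h)).
- by rewrite (gtn_eqF (ltnW h : k < v.+1)) eqSS (gtn_eqF h).
- by rewrite h eqSS (gtn_eqF (ltnSn k)) eqxx.
Qed.

Lemma ncycle_W m : is_ncycle (braid_perm (W m m.+1)).
Proof.
set p := braid_perm _.
have pw k : (k <= m.+1)%N -> val ((p ^+ k)%g ord_max) = (m.+1 - k)%N.
  elim: k => [|k IH] hk; first by rewrite expg0 perm1 subn0.
  rewrite expgSr permM perm_step // IH ?(ltnW hk) //.
  rewrite subn_eq0 leqNgt hk /= leq_subr subnS //.
exists ord_max; apply/setP => j; rewrite inE; apply/porbitP.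
exists (m.+1 - j)%N; apply: val_inj; rewrite pw ?leq_subr // subKn //.
by rewrite -ltnS.
Qed.

Theorem proposition4p45 (gT : finGroupType) (C : {set gT}) :
  C \in classes [set: gT] -> abundant C ->
  forall n : nat, (0 < n)%N -> (#|gT| ^ 2 %| n)%N ->
  exists g : {ffun 'I_n -> gT},
    SurC1 C g /\
    exists w : braid_word n,
      (exists h : gT, braid_act w g = conj_tuple h g) /\
      is_ncycle (braid_perm w).
Proof.
move=> CG [x xC [y Hgen]] n n0 dvd.
have dn : (#|gT| %| n)%N by apply: dvdn_trans dvd; rewrite expnS dvdn_mulr.
have Hs := sur_lemma _ _ _ _ _ CG xC Hgen n0 dn.
exists [ffun i : 'I_n => x ^ (y ^+ i)]; split => //.
case: n n0 dvd dn Hs => [//|[|m]] _ _ dn Hs.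
  exists [::]; split.
    by exists 1; apply/ffunP => i; rewrite !ffunE conjg1.
  exists ord0; apply/setP => i; rewrite inE (ord1 i).
  exact: porbit_id.
exists (W m m.+1); split; last exact: ncycle_W.
exists y; case: Hs => _ _ Hp.
rewrite (rot_step _ _ (fun i => x ^ (y ^+ i))) //.
apply/ffunP => j; rewrite !ffunE.
case: ifP => [_|hj]; first by rewrite -conjgM -expgSr.
have ej : (j == m.+1 :> nat) by rewrite eqn_leq -ltnS ltn_ord leqNgt hj.
rewrite ej expg0 conjg1 -conjgM -expgSr (eqP ej) (pow_n_1 _ _ _ dn) conjg1.
move: Hp; under eq_bigr do rewrite ffunE.
rewrite -(big_mkord xpredT (fun i => x ^ y ^+ i)) big_ltn // expg0 conjg1 => Hp.
have -> : \prod_(1 <= i < m.+2) x ^ y ^+ i = x^-1.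
  by rewrite -[LHS](mulKg x) Hp mulg1.
by rewrite conjgE invgK mulgV mulg1.
Qed.
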